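(* Let $M=M(S^2;\frac{q_1}{p_1},\frac{q_2}{p_2},\frac{q_3}{p_3})$ with $e(M)\neq0$, and let $\rho:\pi_1(M)\to\mathrm{SL}_2(\mathbb{C})$ be a diagonal representation with $\rho(h)=\pm I$. Then $H^1(M,\mathrm{Ad}\,\rho)=0$ if $\rho$ is not exceptional, and $\dim H^1(M,\mathrm{Ad}\,\rho)=2$ if $\rho$ is exceptional.
   Context: $M(S^2;\frac{q_1}{p_1},\frac{q_2}{p_2},\frac{q_3}{p_3})$ ($(p_i,q_i)$ coprime, $p_i\ge1$) is the closed Seifert manifold obtained from $S_{0,3}\times S^1$ by gluing solid tori whose meridians are $p_ic_i+q_ih_i$; $e(M)=\sum_iq_i/p_i$; $\pi_1(M)=\langle c_1,c_2,c_3,h\mid [c_i,h]=1=c_i^{p_i}h^{q_i},\ c_1c_2c_3=1\rangle$. A representation $\rho$ is exceptional if $\rho(h)=\pm I$ and $\rho(c_i)\neq\pm I$ for $i=1,2,3$. $\mathrm{Ad}\,\rho$ is the conjugation action on $\mathfrak{sl}_2(\mathbb{C})$ and $H^1(M,\mathrm{Ad}\,\rho)=Z^1/B^1$, where $Z^1$ is the space of maps $\varepsilon:\pi_1(M)\to\mathfrak{sl}_2(\mathbb{C})$ with $\varepsilon(xy)=\varepsilon(x)+\mathrm{Ad}\,\rho(x)\varepsilon(y)$ and $B^1=\{x\mapsto A-\mathrm{Ad}\,\rho(x)A : A\in\mathfrak{sl}_2(\mathbb{C})\}$. *)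

(* Defs.v *)
From mathcomp Require Import all_boot all_algebra.
From mathcomp Require Import complex.
From mathcomp Require Import Rstruct.
Set Implicit Arguments. Unset Strict Implicit. Unset Printing Implicit Defensive.
Import GRing.Theory.
Local Open Scope ring_scope.

Definition C : closedFieldType := (Rdefinitions.R)[i].

Inductive gen := gc1 | gc2 | gc3 | gh.

(* a letter is a generator together with a flag: false = x, true = x^-1 *)
Definition letter := (gen * bool)%type.
Definition word := seq letter.

Definition inv_letter (x : letter) : letter := (x.1, ~~ x.2).

Definition gpow (g : gen) (n : int) : word := nseq `|n|%N (g, (n < 0)%R).

Definition gc (i : 'I_3) : gen :=
  match val i with 0 => gc1 | 1 => gc2 | _ => gc3 end.

Definition rel_comm (i : 'I_3) : word :=
  [:: (gc i, false); (gh, false); (gc i, true); (gh, true)].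
Definition rel_fib (p : 'I_3 -> nat) (q : 'I_3 -> int) (i : 'I_3) : word :=
  gpow (gc i) (p i)%:Z ++ gpow gh (q i).
Definition rel_prod : word := [:: (gc1, false); (gc2, false); (gc3, false)].

(* The congruence on words whose quotient is
   pi_1(M) = < c1,c2,c3,h | [c_i,h] = 1 = c_i^{p_i} h^{q_i}, c1 c2 c3 = 1 >. *)
Inductive pi1_eq (p : 'I_3 -> nat) (q : 'I_3 -> int) : word -> word -> Prop :=
| pe_refl w : pi1_eq p q w w
| pe_sym u v : pi1_eq p q u v -> pi1_eq p q v u
| pe_trans u v w : pi1_eq p q u v -> pi1_eq p q v w -> pi1_eq p q u w
| pe_ctx a b u v : pi1_eq p q u v -> pi1_eq p q (a ++ u ++ b) (a ++ v ++ b)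
| pe_cancel x : pi1_eq p q [:: x; inv_letter x] [::]
| pe_comm i : pi1_eq p q (rel_comm i) [::]
| pe_fib i : pi1_eq p q (rel_fib p q i) [::]
| pe_prod : pi1_eq p q rel_prod [::].

(* A representation rho : pi_1(M) -> SL_2(C), given as a function on words
   constant on classes of pi1_eq and multiplicative. *)
Definition is_SL2_rep p q (rho : word -> 'M[C]_2) : Prop :=
  [/\ forall u v, pi1_eq p q u v -> rho u = rho v,
      rho [::] = 1%:M,
      forall u v, rho (u ++ v) = rho u *m rho v &
      forall w, \det (rho w) = 1].

Definition rho_h (rho : word -> 'M[C]_2) := rho [:: (gh, false)].
Definition rho_c (rho : word -> 'M[C]_2) (i : 'I_3) := rho [:: (gc i, false)].

Definition diagonal_rep (rho : word -> 'M[C]_2) : Prop :=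
  forall w, is_diag_mx (rho w).

Definition exceptional (rho : word -> 'M[C]_2) : Prop :=
  (rho_h rho = 1%:M \/ rho_h rho = - 1%:M) /\
  forall i : 'I_3, rho_c rho i <> 1%:M /\ rho_c rho i <> - 1%:M.

Definition in_sl2 (A : 'M[C]_2) : Prop := \tr A = 0.
Definition Ad (g A : 'M[C]_2) : 'M[C]_2 := g *m A *m invmx g.

(* Z^1(pi_1 M, Ad rho): maps eps : pi_1(M) -> sl_2(C) (i.e. functions on words
   constant on pi1_eq classes) with eps(xy) = eps(x) + Ad rho(x) eps(y). *)
Definition cocycle p q (rho : word -> 'M[C]_2) (eps : word -> 'M[C]_2) : Prop :=
  [/\ forall w, in_sl2 (eps w),
      forall u v, pi1_eq p q u v -> eps u = eps v &
      forall u v, eps (u ++ v) = eps u + Ad (rho u) (eps v)].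

Definition coboundary (rho : word -> 'M[C]_2) (eps : word -> 'M[C]_2) : Prop :=
  exists A : 'M[C]_2, in_sl2 A /\ forall w, eps w = A - Ad (rho w) A.

Definition H1_zero p q rho : Prop :=
  forall eps, cocycle p q rho eps -> coboundary rho eps.

(* dim_C H^1 = 2: the classes of two cocycles e1, e2 form a basis of Z^1/B^1 *)
Definition H1_dim2 p q rho : Prop :=
  exists e1 e2 : word -> 'M[C]_2,
    [/\ cocycle p q rho e1, cocycle p q rho e2,
        (forall eps, cocycle p q rho eps ->
           exists a b : C, coboundary rho (fun w => eps w - a *: e1 w - b *: e2 w)) &
        (forall a b : C, coboundary rho (fun w => a *: e1 w + b *: e2 w) ->
           a = 0 /\ b = 0)].

Definition euler (p : 'I_3 -> nat) (q : 'I_3 -> int) : rat :=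
  \sum_(i < 3) (q i)%:~R / (p i)%:R.

(* Main.v *)
Require Import Defs.
From mathcomp Require Import all_boot all_algebra.
From mathcomp Require Import complex.
From mathcomp Require Import Rstruct.
From mathcomp Require Import ring.
Import GRing.Theory.
Local Open Scope ring_scope.

Lemma intrC_eq0 (n : int) : (n%:~R : C) = 0 -> n = 0.
Proof. move=> H. apply/eqP. rewrite -(@intr_eq0 (Rdefinitions.R)[i]). exact/eqP. Qed.

Lemma natrC_neq0 (n : nat) : (0 < n)%N -> (n%:R : C) != 0.
Proof. move=> Hn; apply/eqP => /(@intrC_eq0 n) [] H; by rewrite H in Hn. Qed.

Fixpoint geom (x : C) (n : nat) : C := if n is n'.+1 then 1 + x * geom x n' else 0.

Lemma geomE x n : (1 - x) * geom x n = 1 - x ^+ n.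
Proof. elim: n => [|n IH] /=; first by rewrite mulr0 expr0 subrr.
rewrite mulrDr mulr1 mulrCA IH exprS; ring. Qed.

Lemma geom1 n : geom 1 n = n%:R.
Proof. elim: n => [|n IH] //=. by rewrite IH mul1r -add1n natrD. Qed.

Lemma geom0 x n : x != 1 -> x ^+ n = 1 -> geom x n = 0.
Proof. move=> Hx Hn; apply/eqP; move: (geomE x n); rewrite Hn subrr => /eqP.
by rewrite mulf_eq0 subr_eq0 eq_sym (negbTE Hx). Qed.

Definition i0 : 'I_3 := @Ordinal 3 0 isT.
Definition i1 : 'I_3 := @Ordinal 3 1 isT.
Definition i2 : 'I_3 := @Ordinal 3 2 isT.
Lemma ord3 (i : 'I_3) : [\/ i = i0, i = i1 | i = i2].
Proof. case: i => [[|[|[|//]]] Hi]; [constructor 1|constructor 2|constructor 3]; exact: val_inj. Qed.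

Section Scalar.
Variables (p : 'I_3 -> nat) (q : 'I_3 -> int) (chi : word -> C).
Hypothesis chi_mul : forall u v, chi (u ++ v) = chi u * chi v.
Hypothesis chi_nil : chi [::] = 1.
Hypothesis chi_resp : forall u v, pi1_eq p q u v -> chi u = chi v.
Hypothesis chi_h : chi [:: (gh, false)] = 1.

Definition cocyc (f : word -> C) := forall u v, f (u ++ v) = f u + chi u * f v.
Definition resp (f : word -> C) := forall u v, pi1_eq p q u v -> f u = f v.
Definition gv (f : word -> C) g := f [:: (g, false)].

Lemma chi_inv g : chi [:: (g, true)] * chi [:: (g, false)] = 1.
Proof. rewrite -chi_mul -chi_nil; apply: chi_resp; exact: (pe_cancel p q (g, true)). Qed.
Lemma chi_inv' g : chi [:: (g, false)] * chi [:: (g, true)] = 1.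
Proof. rewrite -chi_mul -chi_nil; apply: chi_resp; exact: (pe_cancel p q (g, false)). Qed.
Lemma chi_hinv : chi [:: (gh, true)] = 1.
Proof. by have := chi_inv gh; rewrite chi_h mulr1. Qed.
Lemma chi_neq0 g : chi [:: (g, false)] != 0.
Proof. apply/eqP => H; have := chi_inv g; rewrite H mulr0 => /eqP; by rewrite eq_sym oner_eq0. Qed.
Lemma chi_cons x w : chi (x :: w) = chi [:: x] * chi w.
Proof. exact: (chi_mul [:: x] w). Qed.
Lemma chi_nseq x n : chi (nseq n x) = chi [:: x] ^+ n.
Proof. elim: n => [|n IH]; first by rewrite chi_nil expr0.
by rewrite /= chi_cons IH exprS. Qed.

Section F.
Variable f : word -> C.
Hypothesis fco : cocyc f.

Lemma f_cons x w : f (x :: w) = f [:: x] + chi [:: x] * f w.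
Proof. exact: (fco [:: x] w). Qed.
Lemma f_nil : f [::] = 0.
Proof. have E := fco [::] [::]. rewrite chi_nil mul1r in E.
have: f [::] + f [::] = f [::] + 0 by rewrite addr0 -E. by move/addrI. Qed.
Lemma f_nseq x n : f (nseq n x) = geom (chi [:: x]) n * f [:: x].
Proof. elim: n => [|n IH] /=; first by rewrite f_nil mul0r.
rewrite f_cons IH; ring. Qed.

Hypothesis fre : resp f.
Lemma f_inv g : f [:: (g, true)] = - chi [:: (g, true)] * f [:: (g, false)].
Proof. have E : f [:: (g, true); (g, false)] = f [::] := fre _ _ (pe_cancel p q (g, true)).
rewrite f_cons f_nil in E. rewrite mulNr; apply/eqP; by rewrite -addr_eq0 E. Qed.

Lemma f_uniq : (forall g, f [:: (g, false)] = 0) -> forall w, f w = 0.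
Proof. move=> H0; elim => [|[g b] w IH]; first exact: f_nil.
rewrite f_cons IH mulr0 addr0; case: b; last exact: H0.
by rewrite f_inv H0 mulr0. Qed.


Lemma gpow_pos g n : gpow g (Posz n) = nseq n (g, false).
Proof. by []. Qed.

Lemma f_gpowh z : f (gpow gh z) = z%:~R * f [:: (gh, false)].
Proof. case: z => n.
  by rewrite gpow_pos (f_nseq (gh,false) n) chi_h geom1.
rewrite /gpow. have -> : (Negz n < 0)%R = true by [].
have -> : `|Negz n|%N = n.+1 by [].
rewrite (f_nseq (gh,true) n.+1) chi_hinv geom1 f_inv chi_hinv NegzE intrN.
rewrite -[(n.+1)%:Z%:~R]/(n.+1%:R); ring. Qed.

Lemma chi_gpowh z : chi (gpow gh z) = 1.
Proof. case: z => n; first by rewrite gpow_pos chi_nseq chi_h expr1n.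
rewrite /gpow. have -> : (Negz n < 0)%R = true by [].
by rewrite chi_nseq chi_hinv expr1n. Qed.

End F.

Lemma chi_fib i : chi [:: (gc i, false)] ^+ p i = 1.
Proof. have E : chi (rel_fib p q i) = chi [::] := chi_resp _ _ (pe_fib p q i).
by rewrite /rel_fib chi_mul gpow_pos chi_nseq chi_gpowh mulr1 chi_nil in E. Qed.

Lemma chi_prod : chi [:: (gc1, false)] * chi [:: (gc2, false)] * chi [:: (gc3, false)] = 1.
Proof. have E : chi rel_prod = chi [::] := chi_resp _ _ (pe_prod p q).
by rewrite /rel_prod (chi_cons _ [:: _; _]) (chi_cons _ [:: _]) chi_nil mulrA in E. Qed.

Lemma inv_of (x y : C) : x * y = 1 -> y = x^-1.
Proof. move=> H. have Hx : x != 0 by apply/eqP => Hx; move: H; rewrite Hx mul0r => /eqP; rewrite eq_sym oner_eq0.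
by rewrite -[y](mulKf Hx) H mulr1. Qed.

Section F2.
Variable f : word -> C.
Hypothesis fco : cocyc f.
Hypothesis fre : resp f.

Lemma f_fib i : geom (chi [:: (gc i, false)]) (p i) * f [:: (gc i, false)]
   + (q i)%:~R * f [:: (gh, false)] = 0.
Proof. have E : f (rel_fib p q i) = f [::] := fre _ _ (pe_fib p q i).
by rewrite /rel_fib fco gpow_pos (f_nseq f fco (gc i, false) (p i)) chi_nseq chi_fib mul1r (f_gpowh f fco fre) (f_nil f fco) in E. Qed.

Lemma f_comm i : (chi [:: (gc i, false)] - 1) * f [:: (gh, false)] = 0.
Proof. have E : f (rel_comm i) = f [::] := fre _ _ (pe_comm p q i).
rewrite /rel_comm (f_cons f fco _ [:: _; _; _]) (f_cons f fco _ [:: _; _]) (f_cons f fco _ [:: _]) (f_nil f fco) in E.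
rewrite !(f_inv f fco fre) chi_h chi_hinv (inv_of _ _ (chi_inv' (gc i))) in E.
rewrite -E. field. exact: chi_neq0. Qed.

Lemma f_prod : f [:: (gc1, false)] + chi [:: (gc1, false)] * (f [:: (gc2, false)]
   + chi [:: (gc2, false)] * f [:: (gc3, false)]) = 0.
Proof. have E : f rel_prod = f [::] := fre _ _ (pe_prod p q).
by rewrite /rel_prod (f_cons f fco _ [:: _; _]) (f_cons f fco _ [:: _]) (f_nil f fco) in E. Qed.

Lemma z12 : f [:: (gc1, false)] = 0 -> f [:: (gc2, false)] = 0 -> f [:: (gc3, false)] = 0.
Proof. move=> H1 H2; have := f_prod; rewrite H1 H2 !(mulr0, add0r, addr0) => /eqP.
by rewrite !mulf_eq0 !(negbTE (chi_neq0 _)) /= => /eqP. Qed.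
Lemma z13 : f [:: (gc1, false)] = 0 -> f [:: (gc3, false)] = 0 -> f [:: (gc2, false)] = 0.
Proof. move=> H1 H2; have := f_prod; rewrite H1 H2 !(mulr0, add0r, addr0) => /eqP.
by rewrite !mulf_eq0 !(negbTE (chi_neq0 _)) /= => /eqP. Qed.
Lemma z23 : f [:: (gc2, false)] = 0 -> f [:: (gc3, false)] = 0 -> f [:: (gc1, false)] = 0.
Proof. move=> H1 H2; have := f_prod; by rewrite H1 H2 !(mulr0, add0r, addr0). Qed.

Lemma two_zero j k : j != k -> f [:: (gc j, false)] = 0 -> f [:: (gc k, false)] = 0 ->
  forall i, f [:: (gc i, false)] = 0.
Proof.
move=> Hjk Hj Hk i.
case: (ord3 j) Hjk Hj => ->; case: (ord3 k) Hk => ->; rewrite ?eqxx // => Hk _ Hj;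
case: (ord3 i) => -> //=; by [apply: z12|apply: z13|apply: z23].
Qed.

End F2.

Definition cob (a : C) (w : word) := (1 - chi w) * a.
Lemma cob_co a : cocyc (cob a).
Proof. move=> u v; rewrite /cob chi_mul; ring. Qed.
Lemma cob_re a : resp (cob a).
Proof. by move=> u v H; rewrite /cob (chi_resp _ _ H). Qed.
Lemma sub_co f g : cocyc f -> cocyc g -> cocyc (fun w => f w - g w).
Proof. move=> Hf Hg u v; rewrite Hf Hg; ring. Qed.
Lemma sub_re f g : resp f -> resp g -> resp (fun w => f w - g w).
Proof. by move=> Hf Hg u v H; rewrite (Hf _ _ H) (Hg _ _ H). Qed.
Lemma scal_co s f : cocyc f -> cocyc (fun w => s * f w).
Proof. move=> Hf u v; rewrite Hf; ring. Qed.
Lemma scal_re s f : resp f -> resp (fun w => s * f w).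
Proof. by move=> Hf u v H; rewrite (Hf _ _ H). Qed.

Lemma alg_all_one (P0 P1 P2 Q0 Q1 Q2 x0 x1 x2 y : C) :
  P0 != 0 -> P1 != 0 -> P2 != 0 -> Q0*P1*P2 + Q1*P0*P2 + Q2*P0*P1 != 0 ->
  P0*x0 + Q0*y = 0 -> P1*x1 + Q1*y = 0 -> P2*x2 + Q2*y = 0 -> x0 + (x1 + x2) = 0 ->
  [/\ y = 0, x0 = 0, x1 = 0 & x2 = 0].
Proof.
move=> H0 H1 H2 HN E0 E1 E2 S.
have Hy : (Q0*P1*P2 + Q1*P0*P2 + Q2*P0*P1) * y = 0.
  have -> : (Q0*P1*P2 + Q1*P0*P2 + Q2*P0*P1) * y = P1*P2*(P0*x0 + Q0*y) + P0*P2*(P1*x1 + Q1*y)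
     + P0*P1*(P2*x2 + Q2*y) - P0*P1*P2*(x0 + (x1 + x2)) by ring.
  rewrite E0 E1 E2 S; ring.
move: Hy => /eqP; rewrite mulf_eq0 (negbTE HN) /= => /eqP Hy.
rewrite Hy !mulr0 !addr0 in E0 E1 E2.
have K (P x : C) : P != 0 -> P * x = 0 -> x = 0.
  by move=> HP /eqP; rewrite mulf_eq0 (negbTE HP) /= => /eqP.
split=> //. exact: (K _ _ H0 E0). exact: (K _ _ H1 E1). exact: (K _ _ H2 E2).
Qed.

Arguments alg_all_one {P0 P1 P2 Q0 Q1 Q2 x0 x1 x2 y}.

Definition Nc : C := (q i0)%:~R * (p i1)%:R * (p i2)%:R + (q i1)%:~R * (p i0)%:R * (p i2)%:R
   + (q i2)%:~R * (p i0)%:R * (p i1)%:R.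

Lemma all_one f (fco : cocyc f) (fre : resp f) (hp : forall i, (0 < p i)%N) (hN : Nc != 0) :
  chi [:: (gc1, false)] = 1 -> chi [:: (gc2, false)] = 1 -> chi [:: (gc3, false)] = 1 ->
  forall w, f w = 0.
Proof.
move=> H1 H2 H3.
have F0 := f_fib f fco fre i0. have F1 := f_fib f fco fre i1. have F2 := f_fib f fco fre i2.
change (gc i0) with gc1 in F0. change (gc i1) with gc2 in F1. change (gc i2) with gc3 in F2.
rewrite H1 geom1 in F0. rewrite H2 geom1 in F1. rewrite H3 geom1 in F2.
have S := f_prod f fco fre. rewrite H1 H2 !mul1r in S.
have [Hh Ha Hb Hc] := alg_all_one (natrC_neq0 _ (hp i0)) (natrC_neq0 _ (hp i1)) (natrC_neq0 _ (hp i2)) hN F0 F1 F2 S.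
apply: (f_uniq f fco fre) => -[] //.
Qed.

Lemma nonexc f (fco : cocyc f) (fre : resp f) (hp : forall i, (0 < p i)%N) (hN : Nc != 0) j :
  chi [:: (gc j, false)] = 1 -> exists a, forall w, f w = cob a w.
Proof.
move=> Hj.
have [k Hk | Hall] := pickP (fun k => chi [:: (gc k, false)] != 1); last first.
  have E i : chi [:: (gc i, false)] = 1 by apply/eqP; move: (Hall i) => /= /negbFE.
  exists 0 => w; rewrite /cob mulr0; apply: (all_one _ fco fre hp hN); [exact: (E i0)|exact: (E i1)|exact: (E i2)].
have fh0 : f [:: (gh, false)] = 0.
  move: (f_comm f fco fre k) => /eqP; rewrite mulf_eq0 subr_eq0 (negbTE Hk) /=; by move/eqP.
have fj0 : f [:: (gc j, false)] = 0.
  move: (f_fib f fco fre j); rewrite Hj geom1 fh0 mulr0 addr0 => /eqP.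
  by rewrite mulf_eq0 (negbTE (natrC_neq0 _ (hp j))) /= => /eqP.
have Hk' : 1 - chi [:: (gc k, false)] != 0 by rewrite subr_eq0 eq_sym.
set a := f [:: (gc k, false)] / (1 - chi [:: (gc k, false)]).
have gco := sub_co _ _ fco (cob_co a). have gre := sub_re _ _ fre (cob_re a).
have Hjk : j != k by apply/eqP => E; move: Hk; rewrite -E Hj eqxx.
have gj : f [:: (gc j, false)] - cob a [:: (gc j, false)] = 0 by rewrite /cob Hj subrr mul0r subr0.
have gk : f [:: (gc k, false)] - cob a [:: (gc k, false)] = 0 by rewrite /cob /a mulrC divfK // subrr.
have Hall := two_zero _ gco gre _ _ Hjk gj gk.
exists a => w; apply/eqP; rewrite -subr_eq0; apply/eqP; move: w; apply: (f_uniq _ gco gre).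
case; [exact: (Hall i0)|exact: (Hall i1)|exact: (Hall i2)|].
by rewrite /cob chi_h subrr mul0r subr0.
Qed.

Definition letv (v : gen -> C) (x : letter) : C :=
  if x.2 then - chi [:: (x.1, true)] * v x.1 else v x.1.
Fixpoint Fw (v : gen -> C) (w : word) : C :=
  match w with [::] => 0 | x :: w' => letv v x + chi [:: x] * Fw v w' end.

Lemma Fw_co v : cocyc (Fw v).
Proof. move=> u w; elim: u => [|x u IH] /=; first by rewrite chi_nil mul1r add0r.
rewrite IH (chi_cons x u); ring. Qed.

Lemma Fw_gen v g : Fw v [:: (g, false)] = v g.
Proof. by rewrite /= mulr0 addr0. Qed.

Lemma Fw_re v : v gh = 0 -> (forall i, chi [:: (gc i, false)] != 1) ->
  v gc1 + chi [:: (gc1, false)] * (v gc2 + chi [:: (gc2, false)] * v gc3) = 0 -> resp (Fw v).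
Proof.
move=> Hh Hc Hp u w; elim => {u w}.
- by [].
- by move=> u w _ ->.
- by move=> u w z _ -> _ ->.
- move=> a b u w H IH. by rewrite !(Fw_co v) IH (chi_resp _ _ H).
- case=> g [] /=; rewrite /letv /= !mulr0 !addr0.
    ring.
  transitivity (v g * (1 - chi [:: (g, false)] * chi [:: (g, true)])); first ring.
  by rewrite chi_inv' subrr mulr0.
- move=> i /=. rewrite /letv /= Hh chi_h !mulr0 !addr0 mulr0 add0r mul1r.
  transitivity (v (gc i) * (1 - chi [:: (gc i, false)] * chi [:: (gc i, true)])); first ring.
  by rewrite chi_inv' subrr mulr0.
- move=> i. have Fh b : Fw v [:: (gh, b)] = 0 by case: b; rewrite /= /letv /= Hh ?mulr0 ?addr0.
  rewrite /rel_fib (Fw_co v) gpow_pos (f_nseq (Fw v) (Fw_co v) (gc i, false) (p i)).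
  rewrite (geom0 _ _ (Hc i) (chi_fib i)) mul0r add0r /gpow (f_nseq (Fw v) (Fw_co v)) Fh !mulr0.
  by [].
- by rewrite /= !mulr0 !addr0.
Qed.

Definition vexc (g : gen) : C :=
  match g with gc1 => 0 | gc2 => - chi [:: (gc2, false)] | gc3 => 1 | gh => 0 end.
Definition Fexc := Fw vexc.

Lemma Fexc_co : cocyc Fexc. Proof. exact: Fw_co. Qed.
Lemma Fexc_re : (forall i, chi [:: (gc i, false)] != 1) -> resp Fexc.
Proof. move=> Hc; apply: Fw_re => //=. by rewrite mulr1 addNr mulr0 addr0. Qed.

Lemma exc_span (Hc : forall i, chi [:: (gc i, false)] != 1) f (fco : cocyc f) (fre : resp f) :
  exists s a, forall w, f w = s * Fexc w + cob a w.
Proof.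
have fh0 : f [:: (gh, false)] = 0.
  move: (f_comm f fco fre i0) => /eqP; rewrite mulf_eq0 subr_eq0 (negbTE (Hc i0)) /=; by move/eqP.
have H1 : 1 - chi [:: (gc1, false)] != 0 by rewrite subr_eq0 eq_sym; exact: (Hc i0).
set a := f [:: (gc1, false)] / (1 - chi [:: (gc1, false)]).
set s := f [:: (gc3, false)] - (1 - chi [:: (gc3, false)]) * a.
have gco := sub_co _ _ (sub_co _ _ fco (scal_co s _ Fexc_co)) (cob_co a).
have gre := sub_re _ _ (sub_re _ _ fre (scal_re s _ (Fexc_re Hc))) (cob_re a).
have g1 : (fun w => f w - s * Fexc w - cob a w) [:: (gc i0, false)] = 0.
  by rewrite /= /Fexc Fw_gen /= mulr0 subr0 /cob /a mulrC divfK // subrr.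
have g3 : (fun w => f w - s * Fexc w - cob a w) [:: (gc i2, false)] = 0.
  rewrite /= /Fexc Fw_gen /= mulr1 /s /cob; ring.
have Hall := two_zero _ gco gre _ _ (isT : i0 != i2) g1 g3.
exists s, a => w; apply/eqP; rewrite -subr_eq0 opprD addrA; apply/eqP; move: w.
apply: (f_uniq _ gco gre).
case; [exact: (Hall i0)|exact: (Hall i1)|exact: (Hall i2)|].
by rewrite /= /Fexc Fw_gen /= /cob chi_h subrr mul0r subr0 fh0 mulr0 subr0.
Qed.

Lemma exc_indep (Hc1 : chi [:: (gc1, false)] != 1) s a :
  (forall w, s * Fexc w = cob a w) -> s = 0.
Proof.
move=> H. have E1 := H [:: (gc1, false)]. have E3 := H [:: (gc3, false)].
rewrite /Fexc Fw_gen /= mulr0 /cob in E1. rewrite /Fexc Fw_gen /= mulr1 /cob in E3.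
have Ha : a = 0.
  move: E1 => /eqP; rewrite eq_sym mulf_eq0 subr_eq0 eq_sym (negbTE Hc1) /=; by move/eqP.
by rewrite E3 Ha mulr0.
Qed.

End Scalar.

Set Implicit Arguments. Unset Strict Implicit.

Lemma ord2 (i : 'I_2) : i = 0 \/ i = 1.
Proof. case: i => [[|[|//]] Hi]; [left|right]; exact: val_inj. Qed.
Lemma mul22 (A B : 'M[C]_2) i j : (A *m B) i j = A i 0 * B 0 j + A i 1 * B 1 j.
Proof. rewrite !mxE big_ord_recl. rewrite big_ord_recl big_ord0 addr0.
by congr (A i _ * B _ j + A i _ * B _ j); apply: val_inj. Qed.
Lemma tr2 (A : 'M[C]_2) : \tr A = A 0 0 + A 1 1.
Proof. rewrite /mxtrace big_ord_recl big_ord_recl big_ord0 addr0.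
by congr (A _ _ + A _ _); apply: val_inj. Qed.
Lemma mx2_eq (A B : 'M[C]_2) : A 0 0 = B 0 0 -> A 0 1 = B 0 1 -> A 1 0 = B 1 0 ->
  A 1 1 = B 1 1 -> A = B.
Proof. move=> H1 H2 H3 H4; apply/matrixP => i j.
by case: (ord2 i) => ->; case: (ord2 j) => ->. Qed.

Definition mk2 (a b c d : C) : 'M[C]_2 :=
  \matrix_(i, j) (if i == 0 then (if j == 0 then a else b) else (if j == 0 then c else d)).
Lemma mk2E a b c d : [/\ mk2 a b c d 0 0 = a, mk2 a b c d 0 1 = b,
   mk2 a b c d 1 0 = c & mk2 a b c d 1 1 = d].
Proof. by split; rewrite mxE. Qed.

Lemma diag_det (g : 'M[C]_2) : is_diag_mx g -> \det g = g 0 0 * g 1 1.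
Proof. case/diag_mxP => d ->; rewrite det_diag big_ord_recl big_ord1 !mxE !eqxx !mulr1n.
by congr (d 0 _ * d 0 _); apply: val_inj. Qed.

Lemma diag_off (g : 'M[C]_2) : is_diag_mx g -> g 0 1 = 0 /\ g 1 0 = 0.
Proof. by move/is_diag_mxP => D; split; apply: D. Qed.

Lemma cancel_r (x y a b : C) : a * b = 1 -> x * b = y -> x = a * y.
Proof. move=> Hab <-. rewrite -{1}[x]mulr1 -Hab; ring. Qed.

Lemma Ad_ent (g A : 'M[C]_2) : is_diag_mx g -> \det g = 1 ->
  [/\ Ad g A 0 0 = A 0 0, Ad g A 0 1 = g 0 0 ^+ 2 * A 0 1,
      Ad g A 1 0 = g 1 1 ^+ 2 * A 1 0 & Ad g A 1 1 = A 1 1].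
Proof.
move=> Hd Hdet. have [g01 g10] := diag_off Hd.
have Hgd : g 0 0 * g 1 1 = 1 by rewrite -diag_det.
have Hgd' : g 1 1 * g 0 0 = 1 by rewrite mulrC.
have Hu : g \in unitmx by rewrite unitmxE Hdet unitr1.
have XE : Ad g A *m g = g *m A by rewrite /Ad -mulmxA mulVmx // mulmx1.
set X := Ad g A in XE *. clearbody X.
have E00 : (X *m g) 0 0 = (g *m A) 0 0 by rewrite XE.
have E01 : (X *m g) 0 1 = (g *m A) 0 1 by rewrite XE.
have E10 : (X *m g) 1 0 = (g *m A) 1 0 by rewrite XE.
have E11 : (X *m g) 1 1 = (g *m A) 1 1 by rewrite XE.
rewrite !mul22 g01 g10 !mulr0 !mul0r ?addr0 ?add0r in E00 E01 E10 E11.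
split.
- rewrite (cancel_r Hgd' E00) mulrA Hgd' mul1r //.
- by rewrite (cancel_r Hgd E01) mulrA -expr2.
- by rewrite (cancel_r Hgd' E10) mulrA -expr2.
- rewrite (cancel_r Hgd E11) mulrA Hgd mul1r //.
Qed.

Lemma addE (A B : 'M[C]_2) i j : (A + B) i j = A i j + B i j. Proof. by rewrite !mxE. Qed.
Lemma subE (A B : 'M[C]_2) i j : (A - B) i j = A i j - B i j. Proof. by rewrite !mxE. Qed.
Lemma scaleE (k : C) (A : 'M[C]_2) i j : (k *: A) i j = k * A i j. Proof. by rewrite !mxE. Qed.
Lemma sclE (k : C) : [/\ (k%:M : 'M[C]_2) 0 0 = k, (k%:M : 'M[C]_2) 0 1 = 0,
   (k%:M : 'M[C]_2) 1 0 = 0 & (k%:M : 'M[C]_2) 1 1 = k].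
Proof. by split; rewrite !mxE. Qed.
Lemma oppE (A : 'M[C]_2) i j : (- A) i j = - A i j. Proof. by rewrite !mxE. Qed.

Lemma sum3 (F : 'I_3 -> rat) : \sum_(i < 3) F i = F i0 + F i1 + F i2.
Proof. rewrite !big_ord_recl big_ord0 addr0 addrA.
by congr (F _ + F _ + F _); apply: val_inj. Qed.

Lemma euler_Nc p q : (forall i, (0 < p i)%N) -> euler p q != 0 -> Nc p q != 0.
Proof.
move=> hp he.
pose N : int := q i0 * (p i1)%:Z * (p i2)%:Z + q i1 * (p i0)%:Z * (p i2)%:Z + q i2 * (p i0)%:Z * (p i1)%:Z.
have HNc : Nc p q = N%:~R :> C by rewrite /N !intrD !intrM -!pmulrn.
apply/eqP => H0. rewrite HNc in H0. have N0 := intrC_eq0 _ H0.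
move/eqP: he; apply.
have Hp i : ((p i)%:R : rat) != 0 by rewrite Num.Theory.pnatr_eq0 -lt0n hp.
have E : euler p q * ((p i0)%:R * (p i1)%:R * (p i2)%:R) = N%:~R.
  rewrite /euler sum3 /N !intrD !intrM -!pmulrn. field. by rewrite !Hp.
rewrite N0 /= in E. move/eqP: E; rewrite mulf_eq0 !mulf_eq0 !(negbTE (Hp _)) /= orbF.
by move/eqP.
Qed.

Unset Implicit Arguments. Set Strict Implicit.


Theorem lemma5p14 (p : 'I_3 -> nat) (q : 'I_3 -> int)
  (hp : forall i, (0 < p i)%N)
  (hcop : forall i, coprime (p i) `|q i|%N)
  (he : euler p q != 0)
  (rho : word -> 'M[C]_2)
  (hrho : is_SL2_rep p q rho)
  (hdiag : diagonal_rep rho)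
  (hh : rho_h rho = 1%:M \/ rho_h rho = - 1%:M) :
  (~ exceptional rho -> H1_zero p q rho) /\
  (exceptional rho -> H1_dim2 p q rho).
Proof.
have hN := euler_Nc hp he.
case: hrho => Hre Hnil Hmul Hdet.
have Hoff w := diag_off (hdiag w).
have Had w : rho w 0 0 * rho w 1 1 = 1 by rewrite -diag_det.
have Ha_mul u v : rho (u ++ v) 0 0 = rho u 0 0 * rho v 0 0.
  by rewrite Hmul mul22 (Hoff u).1 mul0r addr0.
have Hd_mul u v : rho (u ++ v) 1 1 = rho u 1 1 * rho v 1 1.
  by rewrite Hmul mul22 (Hoff u).2 mul0r add0r.
have [n00 n01 n10 n11] := sclE 1.
have [m00 m01 m10 m11] := sclE (-1).
have Hnil0 : rho [::] 0 0 = 1 by rewrite Hnil n00.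
have Hnil1 : rho [::] 1 1 = 1 by rewrite Hnil n11.
have Hh0 : rho [:: (gh, false)] 0 0 ^+ 2 = 1.
  by case: hh; rewrite /rho_h => ->; rewrite ?oppE n00 ?sqrrN expr1n.
have Hh1 : rho [:: (gh, false)] 1 1 ^+ 2 = 1.
  by case: hh; rewrite /rho_h => ->; rewrite ?oppE n11 ?sqrrN expr1n.
pose chi1 := fun w => rho w 0 0 ^+ 2.
pose chi2 := fun w => rho w 1 1 ^+ 2.
pose chi0 := fun _ : word => (1 : C).
have M1 : forall u v, chi1 (u ++ v) = chi1 u * chi1 v by move=> u v; rewrite /chi1 Ha_mul exprMn.
have N1 : chi1 [::] = 1 by rewrite /chi1 Hnil0 expr1n.
have R1 : forall u v, pi1_eq p q u v -> chi1 u = chi1 v by move=> u v H; rewrite /chi1 (Hre _ _ H).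
have H1 : chi1 [:: (gh, false)] = 1 by [].
have M2 : forall u v, chi2 (u ++ v) = chi2 u * chi2 v by move=> u v; rewrite /chi2 Hd_mul exprMn.
have N2 : chi2 [::] = 1 by rewrite /chi2 Hnil1 expr1n.
have R2 : forall u v, pi1_eq p q u v -> chi2 u = chi2 v by move=> u v H; rewrite /chi2 (Hre _ _ H).
have H2 : chi2 [:: (gh, false)] = 1 by [].
have M0 : forall u v, chi0 (u ++ v) = chi0 u * chi0 v by move=> u v; rewrite /chi0 mulr1.
have N0 : chi0 [::] = 1 by [].
have R0 : forall u v, pi1_eq p q u v -> chi0 u = chi0 v by [].
have H0 : chi0 [:: (gh, false)] = 1 by [].
have H12 w : chi1 w * chi2 w = 1 by rewrite /chi1 /chi2 -exprMn Had expr1n.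
have Dec : forall eps, cocycle p q rho eps ->
  [/\ forall w, eps w 0 0 = 0, forall w, eps w 1 1 = 0,
      cocyc chi1 (fun w => eps w 0 1) /\ resp p q (fun w => eps w 0 1) &
      cocyc chi2 (fun w => eps w 1 0) /\ resp p q (fun w => eps w 1 0)].
  move=> eps [Hsl Hre' Hco].
  have fx0 : forall w, eps w 0 0 = 0.
    have fco : cocyc chi0 (fun w => eps w 0 0).
      move=> u v; have [K00 _ _ _] := Ad_ent (eps v) (hdiag u) (Hdet u).
      by rewrite Hco addE K00 /chi0 mul1r.
    have fre : resp p q (fun w => eps w 0 0) by move=> u v H; rewrite (Hre' _ _ H).
    exact: (all_one _ _ _ M0 N0 R0 H0 _ fco fre hp hN).
  have fw0 w : eps w 1 1 = 0.
    have := Hsl w; rewrite /in_sl2 tr2 fx0 add0r; done.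
  split => //.
    split; last by move=> u v H; rewrite (Hre' _ _ H).
    move=> u v; have [_ K01 _ _] := Ad_ent (eps v) (hdiag u) (Hdet u).
    by rewrite Hco addE K01.
  split; last by move=> u v H; rewrite (Hre' _ _ H).
  move=> u v; have [_ _ K10 _] := Ad_ent (eps v) (hdiag u) (Hdet u).
  by rewrite Hco addE K10.
have Cob : forall (al be : C) (e : word -> 'M[C]_2),
   (forall w, e w 0 0 = 0) -> (forall w, e w 1 1 = 0) ->
   (forall w, e w 0 1 = cob chi1 al w) -> (forall w, e w 1 0 = cob chi2 be w) ->
   coboundary rho e.
  move=> al be e E00 E11 E01 E10.
  have [k00 k01 k10 k11] := mk2E 0 al be 0.
  exists (mk2 0 al be 0); split.
    by rewrite /in_sl2 tr2 k00 k11 addr0.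
  move=> w; have [K00 K01 K10 K11] := Ad_ent (mk2 0 al be 0) (hdiag w) (Hdet w).
  apply: mx2_eq; rewrite subE ?K00 ?K01 ?K10 ?K11 ?k00 ?k01 ?k10 ?k11.
  - by rewrite E00 subrr.
  - by rewrite E01 /cob /chi1; ring.
  - by rewrite E10 /cob /chi2; ring.
  - by rewrite E11 subrr.
have chi1_eq1 i : chi1 [:: (gc i, false)] = 1 ->
    rho_c rho i = 1%:M \/ rho_c rho i = - 1%:M.
  rewrite /chi1 => /eqP; rewrite sqrf_eq1 => /orP [] /eqP Ha.
    left; have Hd : rho [:: (gc i, false)] 1 1 = 1 by rewrite -(Had [:: (gc i, false)]) Ha mul1r.
    by apply: mx2_eq; rewrite /rho_c ?n00 ?n01 ?n10 ?n11 ?Ha ?Hd ?(Hoff _).1 ?(Hoff _).2.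
  right; have Hd : rho [:: (gc i, false)] 1 1 = -1.
    by have := Had [:: (gc i, false)]; rewrite Ha mulN1r => /eqP; rewrite eqr_oppLR => /eqP.
  by apply: mx2_eq; rewrite /rho_c ?oppE ?n00 ?n01 ?n10 ?n11 ?oppr0 ?Ha ?Hd ?(Hoff _).1 ?(Hoff _).2.
split.
- move=> Hnex.
  have [j Hj] : exists j, chi1 [:: (gc j, false)] = 1.
    case: (pickP (fun j => chi1 [:: (gc j, false)] == 1)) => [j /eqP Hj | Hall]; first by exists j.
    exfalso; apply: Hnex; split => // i.
    have Hn : chi1 [:: (gc i, false)] != 1 by move: (Hall i) => /= ->.
    by split => E; move: Hn; rewrite /chi1; rewrite /rho_c in E; rewrite E ?oppE n00 ?sqrrN expr1n eqxx.
  have Hj2 : chi2 [:: (gc j, false)] = 1 by rewrite -(H12 [:: (gc j, false)]) Hj mul1r.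
  move=> eps Heps; have [E00 E11 [Fco Fre] [Gco Gre]] := Dec eps Heps.
  have [al Hal] := nonexc _ _ _ M1 N1 R1 H1 _ Fco Fre hp hN _ Hj.
  have [be Hbe] := nonexc _ _ _ M2 N2 R2 H2 _ Gco Gre hp hN _ Hj2.
  exact: (Cob al be).
- case=> _ Hexc.
  have Hc1 i : chi1 [:: (gc i, false)] != 1.
    apply/eqP => E; have [] := Hexc i; by case: (chi1_eq1 i E).
  have Hc2 i : chi2 [:: (gc i, false)] != 1.
    apply/eqP => E; move: (Hc1 i); by rewrite -(H12 [:: (gc i, false)]) E mulr1 eqxx.
  pose e1 := fun w => mk2 0 (Fexc chi1 w) 0 0.
  pose e2 := fun w => mk2 0 0 (Fexc chi2 w) 0.
  have F1co := Fexc_co _ M1 N1. have F1re := Fexc_re _ _ _ M1 N1 R1 H1 Hc1.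
  have F2co := Fexc_co _ M2 N2. have F2re := Fexc_re _ _ _ M2 N2 R2 H2 Hc2.
  exists e1, e2; split.
  + split.
    * by move=> w; have [k00 k01 k10 k11] := mk2E 0 (Fexc chi1 w) 0 0; rewrite /in_sl2 tr2 k00 k11 addr0.
    * by move=> u v H; rewrite /e1 (F1re _ _ H).
    * move=> u v; have [K00 K01 K10 K11] := Ad_ent (e1 v) (hdiag u) (Hdet u).
      have [a00 a01 a10 a11] := mk2E 0 (Fexc chi1 (u ++ v)) 0 0.
      have [b00 b01 b10 b11] := mk2E 0 (Fexc chi1 u) 0 0.
      have [c00 c01 c10 c11] := mk2E 0 (Fexc chi1 v) 0 0.
      apply: mx2_eq; rewrite addE ?K00 ?K01 ?K10 ?K11 /e1 ?a00 ?a01 ?a10 ?a11 ?b00 ?b01 ?b10 ?b11 ?c00 ?c01 ?c10 ?c11 ?mulr0 ?addr0 //.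
  + split.
    * by move=> w; have [k00 k01 k10 k11] := mk2E 0 0 (Fexc chi2 w) 0; rewrite /in_sl2 tr2 k00 k11 addr0.
    * by move=> u v H; rewrite /e2 (F2re _ _ H).
    * move=> u v; have [K00 K01 K10 K11] := Ad_ent (e2 v) (hdiag u) (Hdet u).
      have [a00 a01 a10 a11] := mk2E 0 0 (Fexc chi2 (u ++ v)) 0.
      have [b00 b01 b10 b11] := mk2E 0 0 (Fexc chi2 u) 0.
      have [c00 c01 c10 c11] := mk2E 0 0 (Fexc chi2 v) 0.
      apply: mx2_eq; rewrite addE ?K00 ?K01 ?K10 ?K11 /e2 ?a00 ?a01 ?a10 ?a11 ?b00 ?b01 ?b10 ?b11 ?c00 ?c01 ?c10 ?c11 ?mulr0 ?addr0 //.
  + move=> eps Heps; have [E00 E11 [Fco Fre] [Gco Gre]] := Dec eps Heps.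
    have [s1 [al Hal]] := exc_span _ _ _ M1 N1 R1 H1 Hc1 _ Fco Fre.
    have [s2 [be Hbe]] := exc_span _ _ _ M2 N2 R2 H2 Hc2 _ Gco Gre.
    exists s1, s2; apply: (Cob al be) => w.
    * have [b00 _ _ _] := mk2E 0 (Fexc chi1 w) 0 0.
      have [c00 _ _ _] := mk2E 0 0 (Fexc chi2 w) 0.
      by rewrite !subE !scaleE /e1 /e2 b00 c00 E00 !mulr0 !subr0.
    * have [_ _ _ b11] := mk2E 0 (Fexc chi1 w) 0 0.
      have [_ _ _ c11] := mk2E 0 0 (Fexc chi2 w) 0.
      by rewrite !subE !scaleE /e1 /e2 b11 c11 E11 !mulr0 !subr0.
    * have [_ b01 _ _] := mk2E 0 (Fexc chi1 w) 0 0.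
      have [_ c01 _ _] := mk2E 0 0 (Fexc chi2 w) 0.
      rewrite !subE !scaleE /e1 /e2 b01 c01 Hal; ring.
    * have [_ _ b10 _] := mk2E 0 (Fexc chi1 w) 0 0.
      have [_ _ c10 _] := mk2E 0 0 (Fexc chi2 w) 0.
      rewrite !subE !scaleE /e1 /e2 b10 c10 Hbe; ring.
  + move=> a b [A [_ HA]].
    have E01 w : a * Fexc chi1 w = cob chi1 (A 0 1) w.
      have := congr1 (fun M : 'M[C]_2 => M 0 1) (HA w).
      have [_ K01 _ _] := Ad_ent A (hdiag w) (Hdet w).
      have [_ b01 _ _] := mk2E 0 (Fexc chi1 w) 0 0.
      have [_ c01 _ _] := mk2E 0 0 (Fexc chi2 w) 0.
      rewrite /= addE subE !scaleE /e1 /e2 b01 c01 K01 mulr0 addr0 => ->.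
      rewrite /cob /chi1; ring.
    have E10 w : b * Fexc chi2 w = cob chi2 (A 1 0) w.
      have := congr1 (fun M : 'M[C]_2 => M 1 0) (HA w).
      have [_ _ K10 _] := Ad_ent A (hdiag w) (Hdet w).
      have [_ _ b10 _] := mk2E 0 (Fexc chi1 w) 0 0.
      have [_ _ c10 _] := mk2E 0 0 (Fexc chi2 w) 0.
      rewrite /= addE subE !scaleE /e1 /e2 b10 c10 K10 mulr0 add0r => ->.
      rewrite /cob /chi2; ring.
    split; [exact: (exc_indep _ (Hc1 i0) _ _ E01) | exact: (exc_indep _ (Hc2 i0) _ _ E10)].
Qed.
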